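(* Let $S$ and $A$ be nonempty Borel spaces and $q(dy|x,a)$ a signed kernel as in the context, and suppose that (b) for each bounded continuous $f$ on $S$, $(x,a)\mapsto\int_S f(y)\tilde q(dy|x,a)/q_x(a)$ is continuous on $S\times A$, and (c) $(x,a)\mapsto q_x(a)$ is continuous on $S\times A$. Then: (a) for each lower semicontinuous function $c:S\times A\to[0,\infty]$, the function $(x,a)\mapsto c(x,a)/q_x(a)$ is lower semicontinuous on $S\times A$; and for each bounded continuous function $f$ on $S$, $(x,a)\mapsto\int_S f(y)q(dy|x,a)$ is continuous on $S\times A$; (b) for each lower semicontinuous function $f:S\to[0,\infty]$, the function $(x,a)\mapsto\int_S f(y)\tilde q(dy|x,a)\in[0,\infty]$ is lower semicontinuous on $S\times A$.
   Context: $S$ and $A$ are nonempty Borel spaces (metrizable), and $q(dy|x,a)$ is a signed kernel on $\mathcal B(S)$ given $(x,a)\in S\times A$ such that $\tilde q(\Gamma|x,a):=q(\Gamma\setminus\{x\}|x,a)\ge0$ for all $\Gamma\in\mathcal B(S)$, $q(S|x,a)=0$, and, with $q_x(a):=-q(\{x\}|x,a)\ge0$, $\sup_{a\in A}q_x(a)<\infty$ for each $x\in S$. Conventions: $0/0:=0$, $0\cdot\infty:=0$, $c/0:=+\infty$ for $c>0$. *)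

(* Defs.v *)
From HB Require Import structures.
From mathcomp Require Import all_boot all_order all_algebra.
From mathcomp Require Import all_classical all_reals all_analysis.
From mathcomp Require Import measurable_realfun.

Set Implicit Arguments.
Unset Strict Implicit.
Unset Printing Implicit Defensive.

Import Order.TTheory GRing.Theory Num.Theory.
Import numFieldNormedType.Exports.

Local Open Scope classical_set_scope.
Local Open Scope ring_scope.

Definition separable_space (T : topologicalType) : Prop :=
  exists D : set T, countable D /\ dense D.

(* A Polish space is represented as a separable, Hausdorff (i.e. metric),
   complete (pseudo)metric space X; S is a Borel space when there is a
   topological embedding e : S -> X (continuous, injective, open onto its
   image) whose range is a Borel subset of X. *)
Definition borel_space (R : realType) (S : pseudoMetricType R) : Prop :=
  exists (X : completePseudoMetricType R) (e : S -> X),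
    separable_space X /\ hausdorff_space X /\
    injective e /\ continuous e /\
    (forall U : set S, open U ->
       exists V : set X, open V /\ e @` U = range e `&` V) /\
    <<s @open X >> (range e).

Definition borel (T : ptopologicalType) := g_sigma_algebraType (@open T).

Definition charge_integral d (T : measurableType d) (R : realType)
    (nu : {charge set T -> \bar R}) (D : set T) (f : T -> \bar R) : \bar R :=
  let PN := cid (Hahn_decomposition nu) in
  let N := cid (projT2 PN) in
  (\int[jordan_pos (projT2 N)]_(y in D) f y
   - \int[jordan_neg (projT2 N)]_(y in D) f y)%E.

(* Division on [0, +oo] by a real number, with the conventions
   0/0 := 0, c/0 := +oo for c > 0. *)
Definition ediv0 (R : realType) (c : \bar R) (r : R) : \bar R :=
  if r == 0 then (if c == 0%E then 0%E else +oo%E) else (c * (r^-1)%:E)%E.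

(* Main.v *)
Require Import Defs.
From HB Require Import structures.
From mathcomp Require Import all_boot all_order all_algebra.
From mathcomp Require Import all_classical all_reals all_analysis.
From mathcomp Require Import measurable_realfun.
From mathcomp Require Import ring lra.
Import Order.TTheory GRing.Theory Num.Theory.
Import numFieldNormedType.Exports.
Local Open Scope classical_set_scope.
Local Open Scope ring_scope.

Section charge_gen.
Context (R : realType) d (T : measurableType d).
Local Open Scope ereal_scope.

Definition hP (nu : {charge set T -> \bar R}) := projT1 (cid (Hahn_decomposition nu)).
Definition hN (nu : {charge set T -> \bar R}) := projT1 (cid (projT2 (cid (Hahn_decomposition nu)))).
Lemma hPN (nu : {charge set T -> \bar R}) : hahn_decomposition nu (hP nu) (hN nu).
Proof. exact: (projT2 (cid (projT2 (cid (Hahn_decomposition nu))))). Qed.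
Definition jp (nu : {charge set T -> \bar R}) := jordan_pos (hPN nu).
Definition jn (nu : {charge set T -> \bar R}) := jordan_neg (hPN nu).

Lemma charge_integralE (nu : {charge set T -> \bar R}) D f :
  charge_integral nu D f = \int[jp nu]_(y in D) f y - \int[jn nu]_(y in D) f y.
Proof. by []. Qed.

Lemma jordan_sub (nu : {charge set T -> \bar R}) B : measurable B ->
  nu B = jp nu B - jn nu B.
Proof.
move=> mB; rewrite (jordan_decomp (hPN nu) mB) /cadd /=.
by rewrite /cscale /= EFinN mulN1e.
Qed.

Variables (nu : {charge set T -> \bar R}) (D : set T) (mD : measurable D).
Hypothesis Dpos : forall B, measurable B -> B `<=` D -> 0 <= nu B.

Lemma jn_D B : measurable B -> B `<=` D -> jn nu B = 0.
Proof.
move=> mB BD; rewrite /jn jordan_negE cjordan_negE /crestr0 mem_set// /crestr.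
have [_ [mN Nneg] _ _] := hPN nu.
have h1 : nu (B `&` hN nu) <= 0 by apply: Nneg; [exact: measurableI|exact: subIsetr].
have h2 : 0 <= nu (B `&` hN nu).
  by apply: Dpos; [exact: measurableI|exact: (subset_trans (@subIsetl _ _ _) BD)].
have -> : nu (B `&` hN nu) = 0 by apply/eqP; rewrite eq_le h1 h2.
by rewrite oppe0.
Qed.

Lemma jp_D B : measurable B -> B `<=` D -> jp nu B = nu B.
Proof.
move=> mB BD; rewrite (jordan_decomp (hPN nu) mB) /cadd /cscale /=.
have := jn_D B mB BD; rewrite /jn => h.
have -> : cscale (-1) (jordan_neg (hPN nu)) B = 0 by rewrite /cscale /= h mule0.
by rewrite adde0.
Qed.


Lemma int_jn_D f : measurable_fun D f -> \int[jn nu]_(y in D) f y = 0.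
Proof. by move=> mf; apply: null_set_integral => //; exact: jn_D. Qed.

Lemma charge_integral_D f : measurable_fun D f ->
  charge_integral nu D f = \int[jp nu]_(y in D) f y.
Proof. by move=> mf; rewrite charge_integralE int_jn_D// sube0. Qed.

Lemma int_jp_D_bound (g : T -> R) (M : R) : measurable_fun D g ->
  (forall y, `|g y| <= M)%R ->
  `| \int[jp nu]_(y in D) (g y)%:E | <= M%:E * nu D.
Proof.
move=> mg gM.
rewrite (le_trans (le_abse_integral _ mD _))//; first exact/measurable_EFinP.
rewrite -(jp_D D mD (@subset_refl _ D)) -integral_cst//.
apply: ge0_le_integral => //.
- apply: measurableT_comp => //; exact/measurable_EFinP.
- by move=> y _; rewrite /= lee_fin.
Qed.

End charge_gen.

Section topo.
Context (R : realType) (S : pseudoPMetricType R).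

Lemma open_setC1 : borel_space S -> forall x : S, open (~` [set x]).
Proof.
move=> [X [e [_ [hX [ie [ce _]]]]]] x.
have -> : ~` [set x] = e @^-1` (~` [set e x]).
  by apply/seteqP; split => y /= yx; [move=> /ie|move=> yx'; apply: yx; rewrite yx'].
apply: (proj1 (continuousP _) ce); apply: closed_openC.
exact: accessible_closed_set1 (hausdorff_accessible hX) (e x).
Qed.

Lemma meas_open (U : set S) : open U -> measurable (U : set (borel S)).
Proof. by move=> oU; apply: sub_sigma_algebra. Qed.

Lemma cont_meas (h : S -> R) : continuous h -> measurable_fun [set: borel S] h.
Proof.
move=> ch; apply: (measurability _ (RGenOpens.measurableE R)).
move=> _ [_ [a [b ->]] <-]; apply: measurableI => //; apply: meas_open.
by move/continuousP: ch; apply; exact: interval_open.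
Qed.

Lemma lsc_meas (f : S -> \bar R) : lower_semicontinuous f ->
  measurable_fun [set: borel S] f.
Proof.
move=> scif; apply: (measurability _ (ErealGenOInfty.measurableE R)).
move=> /= _ [_ [a ->]] <-; apply: measurableI => //; apply: meas_open.
by rewrite preimage_itvoy; move/lower_semicontinuousP : scif; exact.
Qed.

End topo.

Section ereal_aux.
Context (R : realType).
Local Open Scope ereal_scope.

Lemma lt_dense_E (r : R) (e : \bar R) : r%:E < e -> exists b : R, (r < b)%R /\ b%:E < e.
Proof.
case: e => [s||]//.
- rewrite lte_fin => rs; exists ((r + s) / 2)%R; rewrite lte_fin; split; lra.
- by move=> _; exists (r + 1)%R; split; [lra|exact: ltry].
Qed.

Lemma lee_real_lb (x y : \bar R) : (forall r : R, r%:E < x -> r%:E <= y) -> x <= y.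
Proof.
move=> H; case: y H => [s||] H; last 2 first.
- exact: leey.
- case: x H => [t||] H //.
  + have h : ((t - 1)%:E < t%:E) by rewrite lte_fin; lra.
    by have := H _ h; rewrite leeNy_eq.
  + by have := H _ (ltry 0%R); rewrite leeNy_eq.
rewrite leNgt; apply/negP => /lt_dense_E [b [sb bx]].
by have := H b bx; rewrite lee_fin; lra.
Qed.

End ereal_aux.

Section approx.
Context (R : realType) (S : pseudoPMetricType R) (f : S -> \bar R).
Hypotheses (f0 : forall y, (0 <= f y)%E) (lscf : lower_semicontinuous f).
Local Open Scope ereal_scope.

Definition apx_term (n : nat) (y z : S) : \bar R :=
  mine (f z) n%:R%:E + n%:R%:E * edist (y, z).

Definition Gn n y := ereal_inf [set apx_term n y z | z in [set: S]].

Lemma term_ge0 n y z : 0 <= apx_term n y z.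
Proof.
rewrite /apx_term; apply: adde_ge0; first by rewrite le_min f0 lee_fin ler0n.
by apply: mule_ge0; [rewrite lee_fin ler0n|exact: edist_ge0].
Qed.

Lemma Gn_ge0 n y : 0 <= Gn n y.
Proof. by apply: le_ereal_inf_tmp => _ [z _ <-]; exact: term_ge0. Qed.

Lemma Gn_le n y : Gn n y <= mine (f y) n%:R%:E.
Proof.
apply: (@le_trans _ _ (apx_term n y y)); first by apply: ereal_inf_lbound; exists y.
by rewrite /apx_term edist_refl mule0 adde0.
Qed.

Lemma Gn_fin n y : Gn n y \is a fin_num.
Proof.
rewrite ge0_fin_numE ?Gn_ge0 // (le_lt_trans (Gn_le n y)) //.
by rewrite (le_lt_trans _ (ltry n%:R)) // ge_min lexx orbT.
Qed.

Definition gn n y : R := fine (Gn n y).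

Lemma gnE n y : (gn n y)%:E = Gn n y.
Proof. by rewrite /gn fineK // Gn_fin. Qed.

Lemma gn_ge0 n y : (0 <= gn n y)%R.
Proof. by rewrite -lee_fin gnE Gn_ge0. Qed.

Lemma gn_le_n n y : (gn n y <= n%:R)%R.
Proof. by rewrite -lee_fin gnE (le_trans (Gn_le n y)) // ge_min lexx orbT. Qed.

Lemma gn_le_f n y : (gn n y)%:E <= f y.
Proof. by rewrite gnE (le_trans (Gn_le n y)) // ge_min lexx. Qed.

Lemma gn_nd y m n : (m <= n)%N -> (gn m y <= gn n y)%R.
Proof.
move=> mn; rewrite -lee_fin !gnE; apply: le_ereal_inf_tmp => _ [z _ <-].
apply: (le_trans (ereal_inf_lbound _)); first by exists z.
rewrite /apx_term; apply: leeD.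
  by rewrite le_min !ge_min lexx lee_fin ler_nat mn orbT.
by apply: lee_wpmul2r => //; rewrite lee_fin ler_nat.
Qed.

Lemma Gn_lip n y y' (eps : R) : (0 <= eps)%R -> edist (y, y') <= eps%:E ->
  Gn n y <= (n%:R * eps)%:E + Gn n y'.
Proof.
move=> e0 ed; rewrite -leeBlDl //; apply: le_ereal_inf_tmp => _ [z _ <-].
rewrite leeBlDl //; apply: (le_trans (ereal_inf_lbound _)); first by exists z.
rewrite /apx_term addeCA; apply: leeD => //.
apply: (le_trans (lee_wpmul2l _ (edist_triangle y y' z))); first by rewrite lee_fin.
rewrite ge0_muleDr // EFinM; apply: leeD => //.
by apply: lee_wpmul2l => //; rewrite lee_fin.
Qed.

Lemma gn_cont n : continuous (gn n).
Proof.
move=> y; apply/(@pseudometric_normed_Zmodule.cvgrPdist_le _ R^o) => e e0.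
have e1 : (0 < e / (n%:R + 1))%R by rewrite divr_gt0 // ltr_wpDl.
near=> y'.
have b : ball y (e / (n%:R + 1)) y' by near: y'; exact: nbhsx_ballx.
have ed1 := edist_fin (xy := (y, y')) e1 b.
have ed2 : edist (y', y) <= (e / (n%:R + 1))%:E by rewrite edist_sym.
have h1 := Gn_lip n y y' _ (ltW e1) ed1.
have h2 := Gn_lip n y' y _ (ltW e1) ed2.
rewrite -!gnE -EFinD lee_fin in h1; rewrite -!gnE -EFinD lee_fin in h2.
have ne : (n%:R * (e / (n%:R + 1)) <= e)%R.
  rewrite mulrA ler_pdivrMr ?ltr_wpDl //.
  have : (0 <= n%:R :> R)%R by [].
  nra.
rewrite ler_norml; apply/andP; split; lra.
Unshelve. all: by end_near. Qed.

Lemma gn_big y (a : R) : a%:E < f y -> exists n, (a <= gn n y)%R.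
Proof.
move=> ay.
have [a0|a0] := lerP a 0; first by exists 0%N; exact: le_trans a0 (gn_ge0 0 y).
have [V Vy aV] := lscf y a ay.
move/nbhs_ballP: Vy => [r r0 rV].
pose n := (Num.truncn (a + a / r)).+1.
have an : (a + a / r < n%:R)%R by exact: truncnS_gt.
have ar : (a / r * r = a)%R by rewrite divfK // gt_eqF.
have ar0 : (0 < a / r)%R by rewrite divr_gt0.
exists n; rewrite -lee_fin gnE; apply: le_ereal_inf_tmp => _ [z _ <-].
rewrite /apx_term.
have [bz|nbz] := pselect (ball y r z).
- apply: lee_paddr; first by apply: mule_ge0; [rewrite lee_fin ler0n|exact: edist_ge0].
  rewrite le_min (ltW (aV _ (rV _ bz))) lee_fin /=; lra.
- have rz : r%:E <= edist (y, z).
    rewrite leNgt; apply/negP => h; apply: nbz.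
    exact: (edist_lt_ball (xy := (y, z)) h).
  apply: lee_paddl; first by rewrite le_min f0 lee_fin ler0n.
  apply: (le_trans _ (lee_wpmul2l _ rz)); last by rewrite lee_fin ler0n.
  rewrite -EFinM lee_fin; nra.
Qed.

Lemma gn_cvg y : (fun n => (gn n y)%:E) @ \oo --> f y.
Proof.
have nd : nondecreasing_seq (fun n => (gn n y)%:E).
  by move=> m n mn; rewrite lee_fin gn_nd.
have := ereal_nondecreasing_cvgn nd.
suff -> : ereal_sup (range (fun n => (gn n y)%:E)) = f y by [].
apply/le_anti/andP; split.
  by apply: ge_ereal_sup => _ [n _ <-]; exact: gn_le_f.
apply: lee_real_lb => r /gn_big [n rn].
by apply: le_ereal_sup_tmp; exists (gn n y)%:E; [exists n|rewrite lee_fin].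
Qed.

End approx.

Section ediv0_lsc.
Context (R : realType) (X : topologicalType).
Local Open Scope ereal_scope.

Lemma ediv0_ge0 (c : \bar R) (r : R) : 0 <= c -> (0 <= r)%R -> 0 <= ediv0 c r.
Proof.
move=> c0 r0; rewrite /ediv0; case: ifPn => _; first by case: ifPn.
by apply: mule_ge0 => //; rewrite lee_fin invr_ge0.
Qed.

Lemma ediv0_gt (c : \bar R) (r a b : R) : 0 <= c -> (0 <= r)%R ->
  b%:E < c -> (a * r < b)%R -> a%:E < ediv0 c r.
Proof.
move=> c0 r0 bc arb; rewrite /ediv0; case: ifPn => [/eqP r00|rn0].
  rewrite r00 mulr0 in arb.
  have -> : (c == 0) = false by apply/negbTE; rewrite gt_eqF // (lt_trans _ bc) // lte_fin.
  exact: ltry.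
have rp : (0 < r)%R by rewrite lt_def rn0 r0.
by rewrite lte_pdivlMr // (lt_trans _ bc) // -EFinM lte_fin.
Qed.

Lemma ediv0_lsc (c : X -> \bar R) (Q : X -> R) : (forall p, 0 <= c p) ->
  (forall p, (0 <= Q p)%R) -> lower_semicontinuous c -> continuous Q ->
  lower_semicontinuous (fun p => ediv0 (c p) (Q p)).
Proof.
move=> c0 Q0 lc cQ p a H.
have [a0|a0] := ltrP a 0.
  exists setT; first exact: filterT.
  by move=> y _; rewrite (lt_le_trans _ (ediv0_ge0 _ _ (c0 y) (Q0 y))) // lte_fin.
have [b [ab bc]] : exists b : R, (a * Q p < b)%R /\ b%:E < c p.
  move: H; rewrite /ediv0; case: ifPn => [/eqP Qp0|Qpn0].
    rewrite Qp0 mulr0; case: ifPn => [_|cn0 _]; first by rewrite lte_fin; lra.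
    by apply: lt_dense_E; rewrite lt_def cn0 c0.
  have Qp : (0 < Q p)%R by rewrite lt_def Qpn0 Q0.
  by rewrite lte_pdivlMr // -EFinM => /lt_dense_E.
have [V Vp cV] := lc p b bc.
have W : \forall p' \near p, (a * Q p' < b)%R.
  have hc : (fun p' => a * Q p')%R @ p --> (a * Q p)%R.
    by apply: cvgM; [exact: cvg_cst|exact: cQ].
  exact: (cvgr_lt _ hc _ ab).
exists (V `&` [set p' | (a * Q p' < b)%R]); first by apply: filterI.
by move=> y [Vy Wy]; exact: (ediv0_gt _ _ _ _ (c0 y) (Q0 y) (cV _ Vy) Wy).
Qed.

End ediv0_lsc.

Arguments charge_integral_D {R d T nu D}.
Arguments int_jp_D_bound {R d T nu D}.
Arguments jp_D {R d T nu D}.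
Arguments jn_D {R d T nu D}.
Arguments jordan_sub {R d T nu}.
Arguments charge_integralE {R d T}.
Arguments jp {R d T}.
Arguments jn {R d T}.
Arguments gn {R S}.
Arguments gn_cvg {R S f}.
Arguments gn_cont {R S f}.
Arguments gn_ge0 {R S f}.
Arguments gn_le_n {R S f}.
Arguments gn_le_f {R S f}.
Arguments gn_nd {R S f}.
Arguments lsc_meas {R S}.
Arguments cont_meas {R S}.
Arguments ediv0_lsc {R X}.
Arguments int_jn_D {R d T nu D}.

Theorem lemmaA1 (R : realType)
  (S A : pseudoPMetricType R)
  (q : S -> A -> {charge set borel S -> \bar R}) :
  (* S and A are (nonempty) Borel spaces *)
  borel_space S -> borel_space A ->
  (* q is a kernel: measurable in (x,a) for each Borel set *)
  (forall G : set (borel S), measurable G ->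
     measurable_fun [set: g_sigma_algebraType (@open (S * A)%type)] (fun p => (q p.1 p.2 G : \bar R))) ->
  (* tilde q (G | x, a) = q (G \ {x} | x, a) >= 0 *)
  (forall x a (G : set (borel S)), measurable G ->
     (0 <= q x a (G `\ x))%E) ->
  (* q (S | x, a) = 0 *)
  (forall x a, q x a [set: borel S] = 0%E) ->
  (* sup_a q_x(a) < oo, where q_x(a) = - q ({x} | x, a) *)
  (forall x, exists M : R, forall a, fine (- q x a [set x])%E <= M) ->
  (* (b): weak continuity of tilde q / q_x *)
  (forall f : S -> R, continuous f -> (exists M : R, forall y, `|f y| <= M) ->
     continuous (fun p : S * A =>
       fine (charge_integral (q p.1 p.2) (~` [set p.1]) (fun y => (f y)%:E))
       / fine (- q p.1 p.2 [set p.1])%E)) ->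
  (* (c): continuity of q_x(a) *)
  continuous (fun p : S * A => fine (- q p.1 p.2 [set p.1])%E) ->
  (* conclusion (a) *)
  ((forall c : S * A -> \bar R, (forall p, (0 <= c p)%E) ->
      lower_semicontinuous c ->
      lower_semicontinuous (fun p : S * A =>
        ediv0 (c p) (fine (- q p.1 p.2 [set p.1])%E)))
   /\
   (forall f : S -> R, continuous f -> (exists M : R, forall y, `|f y| <= M) ->
      continuous (fun p : S * A =>
        fine (charge_integral (q p.1 p.2) [set: borel S] (fun y => (f y)%:E)))))
  /\
  (* conclusion (b) *)
  (forall f : S -> \bar R, (forall y, (0 <= f y)%E) -> lower_semicontinuous f ->
     lower_semicontinuous (fun p : S * A =>
       charge_integral (q p.1 p.2) (~` [set p.1]) f)).
Proof.
move=> BS BA qmeas qpos qS qbd hypB hypC.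
have mC1 (x : S) : measurable (~` [set x] : set (borel S)) := @meas_open R S _ (@open_setC1 R S BS x).
have m1 (x : S) : measurable ([set x] : set (borel S)).
  by rewrite -[[set x]]setCK; apply: measurableC.
have Dpos x a (B : set (borel S)) : measurable B -> B `<=` ~` [set x] -> (0 <= q x a B)%E.
  move=> mB Bx; have := qpos x a B mB.
  suff -> : B `\ x = B by [].
  by apply/seteqP; split => y; [case|move=> By; split => //; exact: Bx].
have qC x a : q x a (~` [set x]) = (- q x a [set x])%E.
  by rewrite -setTD chargeD // qS setTI sub0e.
have Q0 x a : 0 <= fine (- q x a [set x])%E.
  by rewrite -qC fine_ge0 // Dpos.
have QE x a : (fine (- q x a [set x])%E)%:E = q x a (~` [set x]).
  by rewrite -qC fineK // fin_num_measure.
have contJ (g : S -> R) : continuous g -> (exists M : R, forall y, `|g y| <= M) ->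
    continuous (fun p : S * A =>
       fine (charge_integral (q p.1 p.2) (~` [set p.1]) (fun y => (g y)%:E))).
  move=> cg [M gM].
  have mg0 := cont_meas g cg.
  have mg : measurable_fun [set: borel S] (fun y => (g y)%:E).
    by apply/measurable_EFinP.
  have JE p : charge_integral (q p.1 p.2) (~` [set p.1]) (fun y => (g y)%:E)
            = (\int[jp (q p.1 p.2)]_(y in ~` [set p.1]) (g y)%:E)%E.
    exact: (charge_integral_D (mC1 p.1) (Dpos p.1 p.2) _ (measurable_funS measurableT (@subsetT _ _) mg)).
  have e p : fine (charge_integral (q p.1 p.2) (~` [set p.1]) (fun y => (g y)%:E))
     = fine (charge_integral (q p.1 p.2) (~` [set p.1]) (fun y => (g y)%:E))
       / fine (- q p.1 p.2 [set p.1])%E * fine (- q p.1 p.2 [set p.1])%E.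
    have [Q00|Qn0] := eqVneq (fine (- q p.1 p.2 [set p.1])%E) 0; last by rewrite divfK.
    rewrite Q00 mulr0 JE.
    have h := int_jp_D_bound (mC1 p.1) (Dpos p.1 p.2) g M (measurable_funS measurableT (@subsetT _ _) mg0) gM.
    rewrite -QE Q00 mule0 in h.
    suff -> : (\int[jp (q p.1 p.2)]_(y in ~` [set p.1]) (g y)%:E)%E = 0%E by [].
    by apply/eqP; rewrite -abse_eq0 eq_le h abse_ge0.
  rewrite (funext e); move=> p; apply: cvgM; [exact: (hypB g cg (ex_intro _ M gM))|exact: hypC].
have finI (g : S -> R) x a M : continuous g -> (forall y, `|g y| <= M) ->
    (\int[jp (q x a)]_(y in ~` [set x]) (g y)%:E)%E \is a fin_num.
  move=> cg gM.
  have h := int_jp_D_bound (mC1 x) (Dpos x a) g M (measurable_funS measurableT (@subsetT _ _) (cont_meas g cg)) gM.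
  rewrite fin_num_abs (le_lt_trans h) // -QE -EFinM; exact: ltry.
split; [split|].
- move=> c c0 lc; apply: ediv0_lsc => //; try (move=> p; exact: Q0).
- move=> g cg [M gM].
  have cJ := contJ g cg (ex_intro _ M gM).
  have mg0 := cont_meas g cg.
  have mg : measurable_fun [set: borel S] (fun y => (g y)%:E).
    by apply/measurable_EFinP.
  have e p : fine (charge_integral (q p.1 p.2) [set: borel S] (fun y => (g y)%:E)) =
      fine (charge_integral (q p.1 p.2) (~` [set p.1]) (fun y => (g y)%:E))
      - g p.1 * fine (- q p.1 p.2 [set p.1])%E.
    case: p => x a /=.
    have setTE : [set: borel S] = ~` [set x] `|` [set x] by rewrite setvU.
    have spl (mu : {measure set borel S -> \bar R}) :
        (\int[mu]_(y in [set: borel S]) (g y)%:E =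
         \int[mu]_(y in ~` [set x]) (g y)%:E + (g x)%:E * mu [set x])%E.
      rewrite setTE integral_setU //.
      all: try exact: mC1; try exact: m1; try (by rewrite -setTE); try (by apply/disj_setPS => y [/= h1 h2]).
      congr (_ + _)%E; rewrite -integral_cst //; apply: eq_integral => y.
      by rewrite inE => ->.
    rewrite !(charge_integralE (q x a)) !spl.
    rewrite (int_jn_D (mC1 x) (Dpos x a) _ (measurable_funS measurableT (@subsetT _ _) mg)).
    rewrite (@jordan_sub _ _ _ (q x a) [set x] (m1 x)).
    have uf := finI g x a M cg gM.
    have f1 : jp (q x a) [set x] \is a fin_num by rewrite fin_num_measure.
    have f2 : jn (q x a) [set x] \is a fin_num by rewrite fin_num_measure.
    have key (u v1 v2 : R) : fine ((u%:E + (g x)%:E * v1%:E) - (0 + (g x)%:E * v2%:E))%E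
        = fine (u%:E - 0)%E - g x * fine (- (v1%:E - v2%:E))%E.
      rewrite -!EFinM add0e sube0 -EFinD -!EFinB -EFinN /=; ring.
    have := key (fine (\int[jp (q x a)]_(y in ~` [set x]) (g y)%:E)%E)
      (fine (jp (q x a) [set x])) (fine (jn (q x a) [set x])).
    rewrite (fineK uf) (fineK f1) (fineK f2); exact.
  rewrite (funext e) => p; apply: cvgB; first exact: cJ.
  apply: cvgM; last exact: hypC.
  by apply: continuous_comp; [exact: cvg_fst|exact: cg].
- move=> f f0 lscf.
  have mf := lsc_meas f lscf.
  have mfD (x : S) : measurable_fun (~` [set x] : set (borel S)) f :=
    measurable_funS measurableT (@subsetT _ _) mf.
  have FE p : charge_integral (q p.1 p.2) (~` [set p.1]) f =
      (\int[jp (q p.1 p.2)]_(y in ~` [set p.1]) f y)%E :=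
    charge_integral_D (mC1 p.1) (Dpos p.1 p.2) f (mfD p.1).
  have gM n : forall y, `|gn f n y| <= n%:R.
    by move=> y; rewrite ger0_norm ?(gn_ge0 f0) ?(gn_le_n f0).
  have cgn n := gn_cont f0 n.
  have mgn n : measurable_fun [set: borel S] (fun y => (gn f n y)%:E).
    by apply/measurable_EFinP; exact: cont_meas.
  have mgnD n (x : S) : measurable_fun (~` [set x] : set (borel S)) (fun y => (gn f n y)%:E) :=
    measurable_funS measurableT (@subsetT _ _) (mgn n).
  have g0 n y : (0 <= (gn f n y)%:E)%E by rewrite lee_fin (gn_ge0 f0).
  have EnE n p : (fine (charge_integral (q p.1 p.2) (~` [set p.1]) (fun y => (gn f n y)%:E)))%:E
      = (\int[jp (q p.1 p.2)]_(y in ~` [set p.1]) (gn f n y)%:E)%E.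
    rewrite (charge_integral_D (mC1 p.1) (Dpos p.1 p.2) _ (mgnD n p.1)).
    by rewrite fineK // (finI _ _ _ _ (cgn n) (gM n)).
  move=> p a H; rewrite FE in H.
  have nd : forall y, (~` [set p.1]) y ->
      {homo (fun n y => (gn f n y)%:E)^~ y : n m / (n <= m)%N >-> (n <= m)%E}.
    by move=> y _ m n mn; rewrite lee_fin (gn_nd f0).
  have hc := @cvg_monotone_convergence _ _ _ (jp (q p.1 p.2)) _ (mC1 p.1)
    (fun n y => (gn f n y)%:E) (fun n => mgnD n p.1) (fun n y _ => g0 n y) nd.
  have lim_eq : (\int[jp (q p.1 p.2)]_(y in ~` [set p.1])
      (fun y0 => limn ((fun n y => (gn f n y)%:E)^~ y0)) y)%E
      = (\int[jp (q p.1 p.2)]_(y in ~` [set p.1]) f y)%E.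
    by apply: eq_integral => y _; rewrite (cvg_lim _ (gn_cvg f0 lscf y)).
  rewrite lim_eq in hc.
  have [N _ hN] := hc _ (open_ereal_gt' H).
  have aN := hN N (leqnn N); rewrite /= -EnE lte_fin in aN.
  have nearE := cvgr_gt _ (contJ _ (cgn N) (ex_intro _ N%:R (gM N)) p) _ aN.
  exists [set p' | a < fine (charge_integral (q p'.1 p'.2) (~` [set p'.1])
                             (fun y => (gn f N y)%:E))]; first exact: nearE.
  move=> p' /= ap'; rewrite FE.
  apply: (@lt_le_trans _ _ (\int[jp (q p'.1 p'.2)]_(y in ~` [set p'.1]) (gn f N y)%:E)%E).
    by rewrite -EnE lte_fin.
  apply: ge0_le_integral => //.
  by move=> y _; exact: (gn_le_f f0).
Qed.
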